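(* Let $0 \le m < n$, let $L$ be an $m$-dimensional affine subspace of $\mathbb{R}^n$, and let $\varepsilon > 0$. Then there exists an embedding $\psi\colon \mathbb{R}^n \setminus L \to \mathbb{R}^n \setminus L$ such that (1) $\psi^{-1}\colon \psi(\mathbb{R}^n\setminus L) \to \mathbb{R}^n \setminus L$ is uniformly continuous; (2) $|\psi(x) - x| < \varepsilon$ for all $x \in \mathbb{R}^n \setminus L$; (3) the closure of $\psi(\mathbb{R}^n \setminus L)$ in $\mathbb{R}^n$ is disjoint from $L$. *)

(* Defs.v *)
From Stdlib Require Import Reals.
From mathcomp Require Import all_boot.


Definition Rn (n : nat) : Type := 'I_n -> R.

Definition edist (n : nat) (x y : Rn n) : R :=
  sqrt (\big[Rplus/R0]_(i < n) (Rmult (Rminus (x i) (y i)) (Rminus (x i) (y i)))).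

Definition affine_subspace (n m : nat) (L : Rn n -> Prop) : Prop :=
  exists (p : Rn n) (v : 'I_m -> Rn n),
    (forall t : 'I_m -> R,
        (forall i : 'I_n, \big[Rplus/R0]_(j < m) (Rmult (t j) (v j i)) = R0) ->
        forall j, t j = R0) /\
    (forall x : Rn n,
        L x <-> exists t : 'I_m -> R,
            forall i : 'I_n, x i = Rplus (p i) (\big[Rplus/R0]_(j < m) (Rmult (t j) (v j i)))).
Arguments edist {n} x y.

(* Main.v *)
Require Import Defs.
From Stdlib Require Import Reals FunctionalExtensionality.
From mathcomp Require Import all_boot all_order all_algebra.
From mathcomp Require Import Rstruct lra ring.
Import GRing.Theory Num.Theory Order.TTheory.
Set Implicit Arguments. Unset Strict Implicit.
Local Open Scope ring_scope.

Definition dot n (u v : 'rV[R]_n) : R := \sum_(i < n) u 0 i * v 0 i.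
Arguments dot {n}.
Definition sq n (u : 'rV[R]_n) := dot u u.
Arguments sq {n}.

Lemma dotC n (u v : 'rV[R]_n) : dot u v = dot v u.
Proof. by apply: eq_bigr => i _; rewrite mulrC. Qed.

Lemma dotDl n (u v w : 'rV[R]_n) : dot (u + v) w = dot u w + dot v w.
Proof. by rewrite /dot -big_split; apply: eq_bigr => i _; rewrite mxE mulrDl. Qed.

Lemma dotZl n a (u w : 'rV[R]_n) : dot (a *: u) w = a * dot u w.
Proof. by rewrite /dot mulr_sumr; apply: eq_bigr => i _; rewrite mxE mulrA. Qed.

Lemma dotDr n (u v w : 'rV[R]_n) : dot w (u + v) = dot w u + dot w v.
Proof. by rewrite dotC dotDl !(dotC w). Qed.

Lemma dotZr n a (u w : 'rV[R]_n) : dot w (a *: u) = a * dot w u.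
Proof. by rewrite dotC dotZl dotC. Qed.

Lemma dot_mul n (u v : 'rV[R]_n) : dot u v = (u *m v^T) 0 0.
Proof. by rewrite mxE; apply: eq_bigr => i _; rewrite mxE. Qed.

Lemma sq_ge0 n (u : 'rV[R]_n) : 0 <= sq u.
Proof. by apply: sumr_ge0 => i _; rewrite -expr2 sqr_ge0. Qed.

Lemma sq_eq0 n (u : 'rV[R]_n) : sq u = 0 -> u = 0.
Proof.
move=> h; apply/rowP => i; rewrite mxE.
have hp : forall j : 'I_n, predT j -> 0 <= u 0 j * u 0 j.
  by move=> j _; rewrite -expr2 sqr_ge0.
have := (@psumr_eq0P _ _ predT (fun i => u 0 i * u 0 i)) hp h i isT.
by move=> /eqP; rewrite mulf_eq0 orbb => /eqP.
Qed.

Lemma sqZD n x y (a b : 'rV[R]_n) :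
  sq (x *: a + y *: b) = x ^+ 2 * sq a + y ^+ 2 * sq b + 2 * x * y * dot a b.
Proof.
rewrite /sq !dotDl !dotDr !dotZl !dotZr (dotC b a); ring.
Qed.

Lemma sqZ n x (a : 'rV[R]_n) : sq (x *: a) = x ^+ 2 * sq a.
Proof. by rewrite /sq dotZl dotZr mulrA expr2. Qed.

Lemma sqD_le n (a b : 'rV[R]_n) : sq (a + b) <= 2 * sq a + 2 * sq b.
Proof.
have h1 := sqZD 1 1 a b. have h2 := sqZD 1 (-1) a b.
rewrite !scale1r in h1 h2. rewrite scaleN1r in h2.
have := sq_ge0 (a + - b). rewrite h1 h2. nra.
Qed.


Lemma unit_diff_id n (a b : 'rV[R]_n) al be :
  0 < al -> 0 < be -> sq a = al ^+ 2 -> sq b = be ^+ 2 ->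
  sq (al^-1 *: a - be^-1 *: b) * (al * be) = 2 * al * be - 2 * dot a b.
Proof.
move=> ha hb ea eb.
have h1 := sqZD al^-1 (- be^-1) a b. rewrite scaleNr in h1. rewrite h1 ea eb.
by field; apply/andP; split; apply: lt0r_neq0.
Qed.

Lemma sqB_id n (a b : 'rV[R]_n) : sq (a - b) = sq a + sq b - 2 * dot a b.
Proof.
have h2 := sqZD 1 (-1) a b. rewrite scale1r scaleN1r in h2. rewrite h2. ring.
Qed.

Lemma sq_unit_diff n (a b : 'rV[R]_n) al be :
  0 < al -> 0 < be -> sq a = al ^+ 2 -> sq b = be ^+ 2 ->
  sq (al^-1 *: a - be^-1 *: b) * (al * be) <= sq (a - b).
Proof.
move=> ha hb ea eb.
rewrite (unit_diff_id ha hb ea eb) sqB_id ea eb.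
have : 0 <= (al - be) ^+ 2 by apply: sqr_ge0.
lra.
Qed.

Lemma sq_normdiff n (a b : 'rV[R]_n) al be :
  0 < al -> 0 < be -> sq a = al ^+ 2 -> sq b = be ^+ 2 ->
  (al - be) ^+ 2 <= sq (a - b).
Proof.
move=> ha hb ea eb.
have h := unit_diff_id ha hb ea eb.
have h0 : 0 <= sq (al^-1 *: a - be^-1 *: b) * (al * be).
  by apply: mulr_ge0; [apply: sq_ge0 | apply: mulr_ge0; apply: ltW].
rewrite sqB_id ea eb. lra.
Qed.

Section Proj.
Variables (m n : nat) (V : 'M[R]_(m, n)).
Hypothesis Vind : forall t : 'rV_m, t *m V = 0 -> t = 0.

Definition G := V *m V^T.
Definition Q := V^T *m invmx G.
Definition N : 'M[R]_n := 1%:M - Q *m V.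

Lemma G_unit : G \in unitmx.
Proof.
rewrite -row_free_unit -kermx_eq0; apply/eqP/row_matrixP => i; rewrite row0.
set t := row i (kermx G).
have htG : t *m G = 0 by apply/sub_kermxP; exact: row_sub.
apply: Vind; apply: sq_eq0.
rewrite /sq dot_mul trmx_mul mulmxA -(mulmxA t) -/G htG mul0mx mxE.
by [].
Qed.

Lemma NK (T : 'rV_m) : T *m V *m N = 0.
Proof.
rewrite /N mulmxBr mulmx1 /Q !mulmxA -(mulmxA T V) -/G.
by rewrite -(mulmxA T G) (mulmxV G_unit) mulmx1 subrr.
Qed.

Lemma NO : N *m V^T = 0.
Proof.
rewrite /N mulmxBl mul1mx /Q -!mulmxA -/G (mulVmx G_unit) mulmx1 subrr.
by [].
Qed.

Lemma NS (u : 'rV_n) : u - u *m N = (u *m Q) *m V.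
Proof. by rewrite /N mulmxBr mulmx1 opprB addrC subrK mulmxA. Qed.

Lemma N_orth (u : 'rV_n) (T : 'rV_m) : dot (u *m N) (T *m V) = 0.
Proof. by rewrite dot_mul trmx_mul -!mulmxA (mulmxA N) NO mul0mx mulmx0 mxE. Qed.

Lemma NN (u : 'rV_n) : u *m N *m N = u *m N.
Proof.
have h := NS u. have e : u *m N = u - (u *m Q) *m V by rewrite -h opprB addrC subrK.
by rewrite {1}e mulmxBl NK subr0.
Qed.

Lemma N_le (u : 'rV_n) : sq (u *m N) <= sq u.
Proof.
have e : u = u *m N + (u *m Q) *m V by rewrite -NS addrC subrK.
rewrite {2}e /sq dotDl !dotDr N_orth (dotC _ (u *m N)) N_orth.
have := sq_ge0 ((u *m Q) *m V). rewrite /sq. lra.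
Qed.

Lemma N_ker (u : 'rV_n) : u *m N = 0 <-> exists T : 'rV_m, u = T *m V.
Proof.
split.
  by move=> h; exists (u *m Q); rewrite -NS h subr0.
by move=> [T ->]; apply: NK.
Qed.

End Proj.

Section Push.
Variables (m n : nat) (V : 'M[R]_(m, n)).
Hypothesis Vind : forall t : 'rV_m, t *m V = 0 -> t = 0.
Variables (P : 'rV[R]_n) (c : R).
Hypothesis c_pos : 0 < c.

Definition w (X : 'rV[R]_n) := (X - P) *m N V.
Definition s X := Num.sqrt (sq (w X)).
Definition ps X := X + (c / s X) *: w X.
Opaque s.

Lemma sq_pos (u : 'rV[R]_n) : u <> 0 -> 0 < sq u.
Proof.
have hc := c_pos.
move=> h; rewrite lt_neqAle sq_ge0 andbT; apply/eqP => e; apply: h; exact: sq_eq0.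
Qed.

Lemma s_pos X : w X <> 0 -> 0 < s X.
Proof. by move=> h; rewrite sqrtr_gt0; apply: sq_pos. Qed.

Lemma s_sq X : sq (w X) = s X ^+ 2.
Proof. by rewrite sqr_sqrtr // sq_ge0. Qed.

Lemma wB X Y : w X - w Y = (X - Y) *m N V.
Proof. by rewrite /w -mulmxBl; congr (_ *m _); rewrite opprB addrA subrK. Qed.

Lemma wps X : w (ps X) = (1 + c / s X) *: w X.
Proof.
have hc := c_pos.
rewrite /w /ps addrAC mulmxDl -scalemxAl -/(w X) /w NN // -/(w X).
by rewrite scalerDl scale1r.
Qed.

Lemma sq_wps X : w X <> 0 -> sq (w (ps X)) = (s X + c) ^+ 2.
Proof.
have hc := c_pos.
move=> h; have hs := s_pos h.
rewrite wps sqZ s_sq; field; exact: lt0r_neq0.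
Qed.

Lemma wps_neq0 X : w X <> 0 -> w (ps X) <> 0.
Proof.
have hc := c_pos.
move=> h e; have := sq_wps h; rewrite e /sq.
have -> : dot (0 : 'rV[R]_n) 0 = 0 by rewrite /dot big1 // => i _; rewrite mxE mul0r.
have := s_pos h. move=> hs e2. have : 0 < (s X + c) ^+ 2.
  by apply: exprn_gt0; apply: addr_gt0.
by rewrite -e2 ltxx.
Qed.

Lemma ps_far X Y : w X <> 0 -> w Y = 0 -> c ^+ 2 <= sq (ps X - Y).
Proof.
have hc := c_pos.
move=> hX hY.
have h1 := N_le Vind (ps X - Y).
rewrite -wB hY subr0 sq_wps // in h1.
have hs := s_pos hX.
apply: le_trans h1. rewrite ler_sqr ?nnegrE; lra.
Qed.

Lemma ps_move X : w X <> 0 -> sq (ps X - X) = c ^+ 2.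
Proof.
have hc := c_pos.
move=> h; have hs := s_pos h.
rewrite /ps addrAC subrr add0r sqZ s_sq; field; exact: lt0r_neq0.
Qed.

Lemma unit_w X : w X <> 0 -> (s X + c)^-1 *: w (ps X) = (s X)^-1 *: w X.
Proof.
have hc := c_pos.
move=> h; have hs := s_pos h.
rewrite wps scalerA; congr (_ *: _); field.
apply/andP; split; apply: lt0r_neq0; lra.
Qed.

Lemma ps_inj X Y : w X <> 0 -> w Y <> 0 -> ps X = ps Y -> X = Y.
Proof.
have hc := c_pos.
move=> hX hY e.
have hx := s_pos hX. have hy := s_pos hY.
have e1 : (s X + c) ^+ 2 = (s Y + c) ^+ 2 by rewrite -sq_wps // -sq_wps // e.
have e2 : s X = s Y.
  move/eqP: e1; rewrite eqrXn2 ?ltr0n //; [by move/eqP => ?; lra | lra | lra].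
have e3 : w X = w Y.
  have := unit_w hX; have := unit_w hY. rewrite e e2 => -> h2.
  have := congr1 (fun v => s Y *: v) h2. rewrite !scalerA mulfV ?scale1r //.
  exact: lt0r_neq0.
move: e; rewrite /ps e2 e3 => /eqP; rewrite (can_eq (addrK _)) => /eqP //.
Qed.

Lemma ps_inv X Y : w X <> 0 -> w Y <> 0 -> sq (X - Y) <= 4 * sq (ps X - ps Y).
Proof.
have hc := c_pos.
move=> hX hY.
have hx := s_pos hX. have hy := s_pos hY.
set E := sq (ps X - ps Y).
set dd := (s X + c)^-1 *: w (ps X) - (s Y + c)^-1 *: w (ps Y).
have h1 : sq dd * ((s X + c) * (s Y + c)) <= E.
  apply: le_trans (sq_unit_diff _ _ (sq_wps hX) (sq_wps hY)) _; try lra.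
  by rewrite wB; apply: N_le.
have eXY : X - Y = (ps X - ps Y) + (- c) *: dd.
  rewrite /dd !unit_w // /ps; apply/rowP => i; rewrite !mxE. ring.
have h2 := sqD_le (ps X - ps Y) ((- c) *: dd).
rewrite -eXY sqZ -/E in h2.
have hk := sq_ge0 dd.
have hA : c ^+ 2 <= (s X + c) * (s Y + c) by nra.
nra.
Qed.

Lemma ps_cont X Y : w X <> 0 -> w Y <> 0 -> sq (Y - X) < (s X / 2) ^+ 2 ->
  sq (ps Y - ps X) <= (2 + 4 * c ^+ 2 / s X ^+ 2) * sq (Y - X).
Proof.
have hc := c_pos.
move=> hX hY hD.
have hx := s_pos hX. have hy := s_pos hY.
set D := sq (Y - X) in hD *.
have hwd : sq (w Y - w X) <= D by rewrite wB; apply: N_le.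
have h3 := sq_normdiff hy hx (s_sq Y) (s_sq X).
have hsy : s X / 2 <= s Y.
  have : (s Y - s X) ^+ 2 < (s X / 2) ^+ 2  by lra.
  nra.
set k := sq ((s Y)^-1 *: w Y - (s X)^-1 *: w X).
have hk : k * (s Y * s X) <= D.
  apply: le_trans hwd; exact: sq_unit_diff hy hx (s_sq Y) (s_sq X).
have ePs : ps Y - ps X = (Y - X) + c *: ((s Y)^-1 *: w Y - (s X)^-1 *: w X).
  rewrite /ps; apply/rowP => i; rewrite !mxE. ring.
have h2 := sqD_le (Y - X) (c *: ((s Y)^-1 *: w Y - (s X)^-1 *: w X)).
rewrite -ePs sqZ -/D -/k in h2.
have hk0 : 0 <= k by apply: sq_ge0.
have hk2 : k <= 2 * D / s X ^+ 2.
  rewrite ler_pdivlMr; last by apply: exprn_gt0.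
  have h4 : 0 <= k * s X * (s Y - s X / 2).
    by apply: mulr_ge0; [apply: mulr_ge0 => //; apply: ltW | rewrite subr_ge0].
  nra.
have -> : (2 + 4 * c ^+ 2 / s X ^+ 2) * D = 2 * D + 2 * c ^+ 2 * (2 * D / s X ^+ 2).
  by field; apply: lt0r_neq0.
have hc2 : 0 <= c ^+ 2 by apply: sqr_ge0.
nra.
Qed.

End Push.


Lemma sqrt_lt_of (a e : R) : 0 < e -> a < e ^+ 2 -> Num.sqrt a < e.
Proof.
move=> he ha.
have : Num.sqrt a < Num.sqrt (e ^+ 2) by rewrite ltr_sqrt // exprn_gt0.
by rewrite sqrtr_sqr gtr0_norm.
Qed.

Lemma lt_of_sqrt (a e : R) : 0 <= a -> Num.sqrt a < e -> a < e ^+ 2.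
Proof.
move=> ha h. rewrite -(sqr_sqrtr ha). have := sqrtr_ge0 a. nra.
Qed.

Lemma le_sqrt_of (a e : R) : 0 <= e -> e ^+ 2 <= a -> e <= Num.sqrt a.
Proof.
move=> he ha. have := ler_wsqrtr ha. by rewrite sqrtr_sqr ger0_norm.
Qed.

Definition toV n (x : Rn n) : 'rV[R]_n := \row_i x i.

Lemma edistE n (x y : Rn n) : edist x y = Num.sqrt (sq (toV x - toV y)).
Proof.
rewrite /edist RsqrtE; congr Num.sqrt; rewrite /sq /dot.
by apply: eq_bigr => i _; rewrite !mxE.
Qed.

Lemma toV_inj n (x y : Rn n) : toV x = toV y -> x = y.
Proof.
move=> e; apply: functional_extensionality => i.
by have := congr1 (fun M : 'rV[R]_n => M 0 i) e; rewrite !mxE.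
Qed.

Lemma Rlt0 (x : R) : (0 < x)%R -> Rlt 0 x.
Proof. by move=> h; apply/RltP. Qed.

Unset Implicit Arguments.
Local Close Scope ring_scope.
Open Scope R_scope.

Theorem mainTheorem5 (n m : nat) (L : Rn n -> Prop) (eps : R) :
  (m < n)%N ->
  affine_subspace n m L ->
  0 < eps ->
  exists psi : Rn n -> Rn n,
    (* psi maps R^n \ L into R^n \ L *)
    (forall x, ~ L x -> ~ L (psi x)) /\
    (* psi is continuous on R^n \ L *)
    (forall x, ~ L x -> forall e, 0 < e -> exists d, 0 < d /\
        forall y, ~ L y -> edist y x < d -> edist (psi y) (psi x) < e) /\
    (* psi is injective on R^n \ L *)
    (forall x y, ~ L x -> ~ L y -> psi x = psi y -> x = y) /\
    (* (1) psi^{-1} : psi(R^n \ L) -> R^n \ L is uniformly continuous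
       (in particular continuous, so psi is an embedding) *)
    (forall e, 0 < e -> exists d, 0 < d /\
        forall x y, ~ L x -> ~ L y ->
          edist (psi x) (psi y) < d -> edist x y < e) /\
    (* (2) |psi x - x| < eps *)
    (forall x, ~ L x -> edist (psi x) x < eps) /\
    (* (3) closure of psi(R^n \ L) is disjoint from L *)
    (forall y, L y -> exists r, 0 < r /\
        forall x, ~ L x -> r <= edist (psi x) y).
Proof.
move=> _ [p [v [hind hL]]] heps0.
have heps : (0 < eps)%R by apply/RltP.
set V : 'M[R]_(m, n) := (\matrix_(j < m, i < n) v j i)%R.
have Vind : forall t : 'rV_m, (t *m V = 0)%R -> t = 0%R.
  move=> t ht; apply/rowP => j; rewrite mxE; apply: hind => i.
  have := congr1 (fun M : 'rV[R]_n => M 0%R i) ht; rewrite !mxE => e.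
  apply: etrans _ e.
  by apply: eq_bigr => k _; rewrite mxE.
set P := toV p.
have Lchar : forall x, L x <-> w V P (toV x) = 0%R.
  move=> x; rewrite hL; split.
    move=> [t ht]; apply/(N_ker Vind); exists (\row_j t j)%R.
    apply/rowP => i; rewrite !mxE ht.
    have -> : forall a b : R, (a + b - a = b)%R by move=> a b; ring.
    by apply: eq_bigr => k _; rewrite !mxE.
  move=> /(N_ker Vind) [T hT]; exists (fun j => T 0%R j) => i.
  have := congr1 (fun M : 'rV[R]_n => M 0%R i) hT; rewrite !mxE => e.
  have -> : x i = (p i + (x i - p i))%R by ring.
  by rewrite e; congr (_ + _)%R; apply: eq_bigr => k _; rewrite !mxE.
set c : R := (eps / 2)%R.
have hc : (0 < c)%R  by rewrite /c; lra.
set psi := fun (x : Rn n) i => ps V P c (toV x) 0%R i.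
have tpsi : forall x, toV (psi x) = ps V P c (toV x).
  by move=> x; apply/rowP => i; rewrite mxE.
have nL : forall x, ~ L x -> w V P (toV x) <> 0%R by move=> x hx e; apply: hx; apply/Lchar.
exists psi; split; [|split; [|split; [|split; [|split]]]].
- move=> x hx; rewrite Lchar tpsi; exact: wps_neq0 (nL x hx).
- move=> x hx e he0.
  have he : (0 < e)%R by apply/RltP.
  have hX := nL x hx. have hsX := s_pos hc hX.
  set sX := s V P (toV x) in hsX *.
  set t := (c / sX)%R.
  have ht : (0 <= t)%R by rewrite /t; apply: divr_ge0; apply: ltW.
  set b := (e / (2 + 2 * t))%R.
  have eb : (b * (2 + 2 * t) = e)%R by rewrite /b; field; apply: lt0r_neq0; lra.
  have hb : (0 < b)%R by rewrite /b; apply: divr_gt0 => //; lra.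
  exists (Num.min (sX / 2) b)%R; split.
    by apply: Rlt0; rewrite lt_min; apply/andP; split => //; lra.
  move=> y hy /RltP hd; apply/RltP.
  have hY := nL y hy.
  have [hd1 hd2] : (Num.min (sX / 2) b <= sX / 2 /\ Num.min (sX / 2) b <= b)%R.
    by split; rewrite ge_min lexx ?orbT.
  rewrite edistE in hd.
  have hD := lt_of_sqrt (sq_ge0 _) hd.
  set D := sq (toV y - toV x) in hD *.
  have hD0 : (0 <= D)%R by apply: sq_ge0.
  set dd := Num.min (sX / 2) b in hd1 hd2 hD hd.
  have hd0 : (0 <= dd)%R by apply: ltW; apply: le_lt_trans (sqrtr_ge0 _) hd.
  have hDs : (D < (sX / 2) ^+ 2)%R by nra.
  have hDb : (D < b ^+ 2)%R by nra.
  have hc1 := ps_cont Vind hc hX hY hDs.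
  rewrite -/sX -/D in hc1.
  rewrite edistE !tpsi; apply: sqrt_lt_of => //.
  apply: le_lt_trans hc1 _.
  have -> : (4 * c ^+ 2 / sX ^+ 2 = 4 * t ^+ 2)%R by rewrite /t; field; apply: lt0r_neq0.
  have hK : (0 < 2 + 4 * t ^+ 2)%R by have := sqr_ge0 t; lra.
  have : ((2 + 4 * t ^+ 2) * D < (2 + 4 * t ^+ 2) * b ^+ 2)%R by rewrite ltr_pM2l.
  rewrite -eb. nra.
- move=> x y hx hy e; apply: toV_inj.
  apply: (ps_inj Vind hc (nL x hx) (nL y hy)). by rewrite -!tpsi e.
- move=> e he0.
  have he : (0 < e)%R by apply/RltP.
  exists (e / 2)%R; split; first by apply: Rlt0; lra.
  move=> x y hx hy /RltP hd; apply/RltP.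
  rewrite edistE !tpsi in hd.
  have hE := lt_of_sqrt (sq_ge0 _) hd.
  have hi := ps_inv Vind hc (nL x hx) (nL y hy).
  rewrite edistE; apply: sqrt_lt_of => //. nra.
- move=> x hx; apply/RltP; rewrite edistE tpsi ps_move //; last exact: nL.
  rewrite sqrtr_sqr gtr0_norm // /c; lra.
- move=> y hy; exists c; split; first by apply: Rlt0.
  move=> x hx; apply/RleP; rewrite edistE tpsi.
  apply: le_sqrt_of; first exact: ltW.
  apply: (ps_far Vind hc (nL x hx)). by apply/Lchar.
Qed.
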